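(* Let $(X,d)$ be a metric space, let $k\geq 1$, let $p_1,\dots,p_k\in X$ and put $D=X\setminus\{p_1,\dots,p_k\}$. Define on $D$ $$\hat\tau_D(x,y)=\frac1k\sum_{i=1}^k\log\Big(1+2\frac{d(x,y)}{\sqrt{d(x,p_i)d(y,p_i)}}\Big),\qquad \tilde\tau_D(x,y)=\frac1k\sum_{i=1}^k\log\Big(1+\frac{d(x,y)}{\sqrt{d(x,p_i)d(y,p_i)}}\Big).$$ Then the space $(D,\hat\tau_D)$ is Gromov hyperbolic with $\delta=3\log 3+\log 2$, i.e. for all $x,y,z,v\in D$, $$\hat\tau_D(x,y)+\hat\tau_D(z,v)\leq \max\{\hat\tau_D(x,z)+\hat\tau_D(y,v),\ \hat\tau_D(x,v)+\hat\tau_D(y,z)\}+2\delta.$$ In particular, if $(X,d)$ is Ptolemaic, then the space $(D,\tilde\tau_D)$ is Gromov hyperbolic with $\delta=3\log 3$ (i.e. $\tilde\tau_D$ satisfies the same four-point inequality with $\delta=3\log 3$).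
   Context: A metric space $(X,d)$ is Ptolemaic if $d(x,y)d(z,w)\leq d(x,z)d(y,w)+d(x,w)d(y,z)$ for all $x,y,z,w\in X$. A space $(Y,\rho)$ is Gromov hyperbolic with constant $\delta\ge 0$ if $\rho(x,y)+\rho(z,v)\leq \max\{\rho(x,z)+\rho(y,v),\ \rho(x,v)+\rho(y,z)\}+2\delta$ for all $x,y,z,v\in Y$. *)

(* Defs.v *)
From Stdlib Require Import Reals.
Open Scope R_scope.

Definition is_metric {X : Type} (d : X -> X -> R) : Prop :=
  (forall x y, 0 <= d x y) /\
  (forall x y, d x y = 0 <-> x = y) /\
  (forall x y, d x y = d y x) /\
  (forall x y z, d x z <= d x y + d y z).

Definition ptolemaic {X : Type} (d : X -> X -> R) : Prop :=
  forall x y z w, d x y * d z w <= d x z * d y w + d x w * d y z.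

(* D = X \ {p_0, ..., p_(k-1)} *)
Definition inD {X : Type} (k : nat) (p : nat -> X) (x : X) : Prop :=
  forall i, (i < k)%nat -> x <> p i.

Definition tau_c {X : Type} (c : R) (d : X -> X -> R) (k : nat) (p : nat -> X)
  (x y : X) : R :=
  / INR k * sum_f_R0 (fun i => ln (1 + c * (d x y / sqrt (d x (p i) * d y (p i))))) (k - 1).

Definition tau_hat {X : Type} := @tau_c X 2.
Definition tau_tilde {X : Type} := @tau_c X 1.

Definition gromov_hyperbolic {X : Type} (P : X -> Prop) (rho : X -> X -> R) (delta : R) : Prop :=
  forall x y z v, P x -> P y -> P z -> P v ->
    rho x y + rho z v <= Rmax (rho x z + rho y v) (rho x v + rho y z) + 2 * delta.

(* Main.v *)
Require Import Defs.
From Stdlib Require Import Reals Lra Psatz Lia.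
Open Scope R_scope.

Lemma FG_lb (c al ep X : R) : 1 <= c -> 0 < al -> 0 < ep ->
  al*al - ep*ep <= X -> ep*ep - al*al <= X ->
  al*al <= al*ep + c*X /\ ep*ep <= al*ep + c*X.
Proof.
  intros Hc Ha He H1 H2.
  assert (0 <= X) by nra.
  destruct (Rle_dec al ep); split; nra.
Qed.

Lemma core_poly (c al be ep ph dxy dzv dxz dyv dxv dyz : R) :
  1 <= c <= 2 -> 0 < al -> 0 < be -> 0 < ep -> 0 < ph ->
  0 <= dxy -> 0 <= dzv ->
  dxy <= al*al + be*be -> dzv <= ep*ep + ph*ph ->
  al*al - ep*ep <= dxz -> ep*ep - al*al <= dxz ->
  be*be - ph*ph <= dyv -> ph*ph - be*be <= dyv ->
  al*al - ph*ph <= dxv -> ph*ph - al*al <= dxv ->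
  be*be - ep*ep <= dyz -> ep*ep - be*be <= dyz ->
  dxv * dyz <= dxz * dyv ->
  (al*be + c*dxy)*(ep*ph + c*dzv) <= 100*((al*ep + c*dxz)*(be*ph + c*dyv)).
Proof.
  intros [Hc1 Hc2] Ha Hb He Hp Hxy Hzv h1 h2 h3 h3' h4 h4' h5 h5' h6 h6' hP.
  set (F := al*ep + c*dxz). set (G := be*ph + c*dyv).
  destruct (FG_lb c al ep dxz Hc1 Ha He h3 h3') as [Fa Fe]. fold F in Fa, Fe.
  destruct (FG_lb c be ph dyv Hc1 Hb Hp h4 h4') as [Gb Gp]. fold G in Gb, Gp.
  assert (0 <= dxz) by nra. assert (0 <= dyv) by nra.
  assert (HFG : dxz*dyv <= F*G).
  { unfold F, G. assert (0 <= al*ep*(be*ph)) by (apply Rmult_le_pos; nra).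
    assert (0 <= al*ep*(c*dyv)) by (apply Rmult_le_pos; nra).
    assert (0 <= c*dxz*(be*ph)) by (apply Rmult_le_pos; nra).
    assert (0 <= dxz*dyv) by (apply Rmult_le_pos; lra).
    assert (1 <= c*c) by nra.
    assert (dxz*dyv <= c*dxz*(c*dyv)).
    { replace (c*dxz*(c*dyv)) with ((c*c)*(dxz*dyv)) by ring. nra. }
    replace ((al * ep + c * dxz) * (be * ph + c * dyv)) with
      (al*ep*(be*ph) + al*ep*(c*dyv) + c*dxz*(be*ph) + c*dxz*(c*dyv)) by ring.
    lra. }
  assert (pr : forall u w, 0 <= u -> 0 <= w -> u <= F -> w <= G -> u*w <= F*G).
  { intros u w Hu Hw HuF HwG. apply Rmult_le_compat; lra. }
  assert (L1 : forall M, al*al <= M -> be*be <= M -> al*be + c*dxy <= 5*M).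
  { intros M H1 H2. assert (al*be <= M) by nra. assert (c*dxy <= 2*(2*M)) by nra. lra. }
  assert (L2 : forall M, ep*ep <= M -> ph*ph <= M -> ep*ph + c*dzv <= 5*M).
  { intros M H1 H2. assert (ep*ph <= M) by nra. assert (c*dzv <= 2*(2*M)) by nra. lra. }
  assert (Key : forall M1 M2, al*al <= M1 -> be*be <= M1 -> ep*ep <= M2 -> ph*ph <= M2
     -> M1*M2 <= 4*(F*G) -> (al*be + c*dxy)*(ep*ph + c*dzv) <= 100*(F*G)).
  { intros M1 M2 H1 H2 H3 H4 H5.
    assert (0 <= al*be + c*dxy) by nra. assert (0 <= ep*ph + c*dzv) by nra.
    assert ((al*be + c*dxy)*(ep*ph + c*dzv) <= (5*M1)*(5*M2)).
    { apply Rmult_le_compat; auto. }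
    lra. }
  destruct (Rle_dec be al); destruct (Rle_dec ph ep).
  - apply (Key (al*al) (ep*ep)); [nra|nra|nra|nra|].
    destruct (Rle_dec (al*al) (4*(ph*ph))).
    { assert (ep*ep*(ph*ph) <= F*G) by (apply pr; nra). nra. }
    destruct (Rle_dec (ep*ep) (4*(be*be))).
    { assert (al*al*(be*be) <= F*G) by (apply pr; nra). nra. }
    assert (3/4*(al*al) <= dxv) by nra. assert (3/4*(ep*ep) <= dyz) by nra.
    assert (3/4*(al*al)*(3/4*(ep*ep)) <= dxv*dyz) by (apply Rmult_le_compat; nra).
    nra.
  - apply (Key (al*al) (ph*ph)); [nra|nra|nra|nra|].
    assert (al*al*(ph*ph) <= F*G) by (apply pr; nra). nra.
  - apply (Key (be*be) (ep*ep)); [nra|nra|nra|nra|].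
    assert (ep*ep*(be*be) <= F*G) by (apply pr; nra). nra.
  - apply (Key (be*be) (ph*ph)); [nra|nra|nra|nra|].
    destruct (Rle_dec (be*be) (4*(ep*ep))).
    { assert (ep*ep*(ph*ph) <= F*G) by (apply pr; nra). nra. }
    destruct (Rle_dec (ph*ph) (4*(al*al))).
    { assert (al*al*(be*be) <= F*G) by (apply pr; nra). nra. }
    assert (3/4*(ph*ph) <= dxv) by nra. assert (3/4*(be*be) <= dyz) by nra.
    assert (3/4*(ph*ph)*(3/4*(be*be)) <= dxv*dyz) by (apply Rmult_le_compat; nra).
    nra.
Qed.

Lemma ln_le' (x y : R) : 0 < x -> x <= y -> ln x <= ln y.
Proof.
  intros Hx Hxy. destruct (Rle_lt_or_eq_dec _ _ Hxy) as [H|H].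
  - left. apply ln_increasing; auto.
  - rewrite H; lra.
Qed.

Lemma psi_form (c a b d0 : R) : 0 < a -> 0 < b ->
  1 + c*(d0/sqrt(a*b)) = (sqrt a * sqrt b + c*d0) * / (sqrt a * sqrt b).
Proof.
  intros Ha Hb. rewrite sqrt_mult by lra.
  assert (0 < sqrt a) by (apply sqrt_lt_R0; lra).
  assert (0 < sqrt b) by (apply sqrt_lt_R0; lra).
  field. lra.
Qed.

Lemma per_i {X : Type} (d : X -> X -> R) (c : R) (q x y z v : X) :
  1 <= c <= 2 -> is_metric d -> x <> q -> y <> q -> z <> q -> v <> q ->
  d x v * d y z <= d x z * d y v ->
  let f := fun u w => ln (1 + c*(d u w / sqrt (d u q * d w q))) in
  f x y + f z v <= f x z + f y v + ln 100.
Proof.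
  intros Hc [Hpos [Heq [Hsym Htri]]] Hx Hy Hz Hv HP f. unfold f.
  assert (pos : forall u, u <> q -> 0 < d u q).
  { intros u Hu. destruct (Hpos u q) as [H|H]; auto.
    exfalso. apply Hu. apply Heq. auto. }
  pose proof (pos x Hx) as Ha. pose proof (pos y Hy) as Hb.
  pose proof (pos z Hz) as He. pose proof (pos v Hv) as Hf.
  rewrite !psi_form by auto.
  set (al := sqrt (d x q)). set (be := sqrt (d y q)).
  set (ep := sqrt (d z q)). set (ph := sqrt (d v q)).
  assert (Hal : 0 < al) by (apply sqrt_lt_R0; lra).
  assert (Hbe : 0 < be) by (apply sqrt_lt_R0; lra).
  assert (Hep : 0 < ep) by (apply sqrt_lt_R0; lra).
  assert (Hph : 0 < ph) by (apply sqrt_lt_R0; lra).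
  assert (EqA : al*al = d x q) by (apply sqrt_sqrt; lra).
  assert (EqB : be*be = d y q) by (apply sqrt_sqrt; lra).
  assert (EqE : ep*ep = d z q) by (apply sqrt_sqrt; lra).
  assert (EqF : ph*ph = d v q) by (apply sqrt_sqrt; lra).
  assert (T1 : forall u w, d u w <= d u q + d w q).
  { intros u w. rewrite (Hsym w q). apply Htri. }
  assert (T2 : forall u w, d u q - d w q <= d u w).
  { intros u w. pose proof (Htri u w q). lra. }
  assert (T3 : forall u w, d w q - d u q <= d u w).
  { intros u w. pose proof (T2 w u). rewrite (Hsym w u) in *. lra. }
  pose proof ( core_poly c al be ep ph (d x y) (d z v) (d x z) (d y v) (d x v) (d y z)
    Hc Hal Hbe Hep Hph (Hpos _ _) (Hpos _ _)) as Hcore.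
  rewrite EqA, EqB, EqE, EqF in Hcore.
  specialize (Hcore (T1 _ _) (T1 _ _) (T2 _ _) (T3 _ _) (T2 _ _) (T3 _ _)
     (T2 _ _) (T3 _ _) (T2 _ _) (T3 _ _) HP).
  assert (P1 : 0 < (al*be + c*d x y) * / (al*be)).
  { apply Rmult_lt_0_compat. pose proof (Hpos x y). nra. apply Rinv_0_lt_compat; nra. }
  assert (P2 : 0 < (ep*ph + c*d z v) * / (ep*ph)).
  { apply Rmult_lt_0_compat. pose proof (Hpos z v). nra. apply Rinv_0_lt_compat; nra. }
  assert (P3 : 0 < (al*ep + c*d x z) * / (al*ep)).
  { apply Rmult_lt_0_compat. pose proof (Hpos x z). nra. apply Rinv_0_lt_compat; nra. }
  assert (P4 : 0 < (be*ph + c*d y v) * / (be*ph)).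
  { apply Rmult_lt_0_compat. pose proof (Hpos y v). nra. apply Rinv_0_lt_compat; nra. }
  set (p1 := (al * be + c * d x y) * / (al * be)) in *.
  set (p2 := (ep * ph + c * d z v) * / (ep * ph)) in *.
  set (p3 := (al * ep + c * d x z) * / (al * ep)) in *.
  set (p4 := (be * ph + c * d y v) * / (be * ph)) in *.
  assert (Hprod : p1 * p2 <= 100 * (p3 * p4)).
  { assert (Hden : 0 < / (al*be*ep*ph)).
    { apply Rinv_0_lt_compat. repeat apply Rmult_lt_0_compat; auto. }
    unfold p1, p2, p3, p4.
    replace ((al * be + c * d x y) * / (al * be) * ((ep * ph + c * d z v) * / (ep * ph)))
      with ((al * be + c * d x y) * (ep * ph + c * d z v) * / (al*be*ep*ph)) by (field; lra).
    replace (100 * ((al * ep + c * d x z) * / (al * ep) * ((be * ph + c * d y v) * / (be * ph))))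
      with (100 * ((al * ep + c * d x z) * (be * ph + c * d y v)) * / (al*be*ep*ph)) by (field; lra).
    apply Rmult_le_compat_r; lra. }
  rewrite <- (ln_mult p1 p2) by auto.
  rewrite <- (ln_mult p3 p4) by auto.
  rewrite <- (ln_mult (p3*p4) 100) by (try apply Rmult_lt_0_compat; auto; lra).
  apply ln_le'. apply Rmult_lt_0_compat; auto. lra.
Qed.
Lemma tau_sym {X : Type} (d : X -> X -> R) c k (p : nat -> X) x y :
  is_metric d -> tau_c c d k p x y = tau_c c d k p y x.
Proof.
  intros [_ [_ [Hsym _]]]. unfold tau_c. f_equal.
  apply sum_eq. intros i _. rewrite (Hsym x y), (Rmult_comm (d x (p i))). reflexivity.
Qed.

Lemma sub_gromov {X : Type} (d : X -> X -> R) (k : nat) (p : nat -> X) c delta x y z v :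
  1 <= c <= 2 -> ln 100 <= 2*delta -> is_metric d -> (1 <= k)%nat ->
  inD k p x -> inD k p y -> inD k p z -> inD k p v ->
  d x v * d y z <= d x z * d y v ->
  tau_c c d k p x y + tau_c c d k p z v <= tau_c c d k p x z + tau_c c d k p y v + 2*delta.
Proof.
  intros Hc Hdel Hm Hk Hx Hy Hz Hv HP. unfold tau_c.
  set (f := fun u w i => ln (1 + c * (d u w / sqrt (d u (p i) * d w (p i))))).
  change (fun i => ln (1 + c * (d ?u ?w / sqrt (d ?u (p i) * d ?w (p i))))) with (f u w).
  assert (HkR : 0 < INR k) by (apply lt_0_INR; lia).
  assert (Hs : sum_f_R0 (fun i => f x y i + f z v i) (k-1) <=
               sum_f_R0 (fun i => f x z i + f y v i + ln 100) (k-1)).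
  { apply sum_Rle. intros n Hn. unfold f.
    apply (per_i d c (p n) x y z v Hc Hm); auto; [apply Hx|apply Hy|apply Hz|apply Hv]; lia. }
  rewrite plus_sum in Hs. rewrite plus_sum, plus_sum, sum_cte in Hs.
  replace (S (k-1)) with k in Hs by lia.
  assert (H2 : / INR k * (sum_f_R0 (f x y) (k - 1) + sum_f_R0 (f z v) (k - 1)) <=
    / INR k * (sum_f_R0 (f x z) (k - 1) + sum_f_R0 (f y v) (k - 1) + ln 100 * INR k)).
  { apply Rmult_le_compat_l; auto. left; apply Rinv_0_lt_compat; auto. }
  replace (/ INR k * (sum_f_R0 (f x z) (k - 1) + sum_f_R0 (f y v) (k - 1) + ln 100 * INR k))
    with (/ INR k * sum_f_R0 (f x z) (k - 1) + / INR k * sum_f_R0 (f y v) (k - 1) + ln 100)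
    in H2 by (field; lra).
  lra.
Qed.

Lemma gromov_c {X : Type} (d : X -> X -> R) (k : nat) (p : nat -> X) c delta :
  1 <= c <= 2 -> ln 100 <= 2*delta -> is_metric d -> (1 <= k)%nat ->
  gromov_hyperbolic (inD k p) (tau_c c d k p) delta.
Proof.
  intros Hc Hdel Hm Hk x y z v Hx Hy Hz Hv.
  destruct (Rle_dec (d x v * d y z) (d x z * d y v)) as [H|H].
  - pose proof (sub_gromov d k p c delta x y z v Hc Hdel Hm Hk Hx Hy Hz Hv H).
    pose proof (Rmax_l (tau_c c d k p x z + tau_c c d k p y v)
                       (tau_c c d k p x v + tau_c c d k p y z)). lra.
  - assert (H' : d x z * d y v <= d x v * d y z) by lra.
    pose proof (sub_gromov d k p c delta x y v z Hc Hdel Hm Hk Hx Hy Hv Hz H').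
    rewrite (tau_sym d c k p v z Hm) in H0.
    pose proof (Rmax_r (tau_c c d k p x z + tau_c c d k p y v)
                       (tau_c c d k p x v + tau_c c d k p y z)). lra.
Qed.

Lemma ln100 : ln 100 <= 2 * (3 * ln 3).
Proof.
  replace (2 * (3 * ln 3)) with (INR 6 * ln 3) by (simpl; ring).
  rewrite <- ln_pow by lra. apply ln_le'; [lra|]. simpl; lra.
Qed.

Theorem theorem4p2 (X : Type) (d : X -> X -> R) (k : nat) (p : nat -> X) :
  is_metric d -> (1 <= k)%nat ->
  gromov_hyperbolic (inD k p) (tau_hat d k p) (3 * ln 3 + ln 2) /\
  (ptolemaic d -> gromov_hyperbolic (inD k p) (tau_tilde d k p) (3 * ln 3)).
Proof.
  intros Hm Hk. pose proof ln100. pose proof ln_lt_2. split.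
  - apply gromov_c; auto; lra.
  - intros _. apply gromov_c; auto; lra.
Qed.
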